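(* Let $q\ge2$ and let $W$ be a $q$-ary symmetric channel on an alphabet $\mathcal{X}=\mathcal{Y}$ with $|\mathcal{X}|=q$, i.e., $W(y|x)=v$ if $y=x$ and $W(y|x)=u$ if $y\ne x$, where $u,v\in[0,1]$ and $v=1-(q-1)u$. Then $$\eta_\infty(W):=\sup_{P_0,P_1\in\Delta(\mathcal{X})}\frac{D_\infty(Q_0\|Q_1)}{D_\infty(P_0\|P_1)}=\frac{|v-u|}{\max\{u,v\}},$$ where $Q_i(y)=\sum_xP_i(x)W(y|x)$. Furthermore, this supremum is achieved in the limit by degenerate distributions (binary input pairs that both converge to the same point mass).
   Context: $\Delta(\mathcal{X})$ is the probability simplex on $\mathcal{X}$; $D_\infty(P\|Q)=\log\max_x\frac{P(x)}{Q(x)}$ is the Rényi divergence of order infinity. *)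

(* Defs.v *)
From HB Require Import structures.
From mathcomp Require Import all_boot all_order all_algebra.
From mathcomp Require Import all_classical all_reals all_analysis.
Set Implicit Arguments. Unset Strict Implicit. Unset Printing Implicit Defensive.
Import Order.TTheory GRing.Theory Num.Theory.
Import numFieldNormedType.Exports.
Local Open Scope classical_set_scope.
Local Open Scope ring_scope.

Section Defs.
Variables (R : realType) (X : finType).

Definition is_dist (P : X -> R) : Prop :=
  (forall x, 0 <= P x) /\ \sum_(x : X) P x = 1.

(* Renyi divergence of order infinity: log max_x P(x)/Q(x), with the
   conventions 0/0 = 0 and D = +oo if P(x) > 0 = Q(x) for some x. *)
Definition Dinf (P Q : X -> R) : \bar R :=
  if [exists x, (0 < P x) && (Q x == 0)] then +oo%E
  else (ln (\big[Num.max/0]_(x : X) (P x / Q x)))%:E.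

Definition qsc (u v : R) (x y : X) : R := if y == x then v else u.

Definition chan_out (u v : R) (P : X -> R) (y : X) : R :=
  \sum_(x : X) P x * qsc u v x y.

Definition ratio_set (u v : R) : set R :=
  [set r | exists P0 P1 : X -> R,
     [/\ is_dist P0, is_dist P1,
         (0 < Dinf P0 P1 < +oo)%E &
         Dinf (chan_out u v P0) (chan_out u v P1) = (r%:E * Dinf P0 P1)%E]].

End Defs.

(* Main.v *)
Require Import Defs.
From HB Require Import structures.
From mathcomp Require Import all_boot all_order all_algebra.
From mathcomp Require Import all_classical all_reals all_analysis.
From mathcomp Require Import ring lra.
Import Order.TTheory GRing.Theory Num.Theory.
Import numFieldNormedType.Exports.
Local Open Scope classical_set_scope.
Local Open Scope ring_scope.
Set Implicit Arguments. Unset Strict Implicit.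

Lemma ln_conc (R : realType) (s M : R) : 0 <= s -> s <= 1 -> 0 < M ->
  s * ln M <= ln (1 + s * (M - 1)).
Proof.
move=> s0 s1 M0.
have := @concave_ln _ (Itv01 (eqbRL s0 erefl) s1) M 1 M0 ltr01.
rewrite !convRE /= ln1 mulr0 addr0 => H; apply: (le_trans H).
by rewrite /unstable.onem mulr1 (_ : s * M + (1 - s) = 1 + s * (M - 1)) //; ring.
Qed.

Section S.
Variables (R : realType) (X : finType).

Definition mx (P Q : X -> R) := \big[Num.max/0]_(x : X) (P x / Q x).

Lemma sum_neq (P : X -> R) y : is_dist P -> \sum_(x | x != y) P x = 1 - P y.
Proof. by case=> _ s1; rewrite -s1 [in RHS](bigD1 y) //=; ring. Qed.

Lemma chan_outE u v (P : X -> R) y : is_dist P ->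
  chan_out u v P y = u + (v - u) * P y.
Proof.
move=> dP; rewrite /chan_out (bigD1 y) //= /qsc eqxx.
rewrite (eq_bigr (fun x => P x * u)); last by move=> x /negbTE; rewrite eq_sym => ->.
by rewrite -mulr_suml sum_neq //; ring.
Qed.

Lemma Dinf_fin (P0 P1 : X -> R) : is_dist P0 -> is_dist P1 ->
  (0 < Dinf P0 P1 < +oo)%E ->
  [/\ Dinf P0 P1 = (ln (mx P0 P1))%:E, 1 < mx P0 P1,
      forall x, P0 x <= mx P0 P1 * P1 x &
      forall x, 1 - P0 x <= mx P0 P1 * (1 - P1 x)].
Proof.
move=> dP0 dP1; have [d0 _] := dP0; have [d1 _] := dP1; rewrite /Dinf; case: ifPn => [_|/existsPn H].
  by rewrite ltxx andbF.
rewrite lte_fin ltry andbT => lnM.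
have M1 : 1 < mx P0 P1.
  by rewrite ltNge; apply/negP => /ln_le0; rewrite leNgt lnM.
have F2 : forall x, P0 x <= mx P0 P1 * P1 x.
  move=> x; have := H x; rewrite negb_and -leNgt.
  have [->|nz] := eqVneq (P1 x) 0.
    by rewrite orbF mulr0.
  move=> _; have p1 : 0 < P1 x by rewrite lt_def nz d1.
  by rewrite -ler_pdivrMr // /mx; exact: le_bigmax.
have F3 : forall x, 1 - P0 x <= mx P0 P1 * (1 - P1 x).
  move=> x; rewrite -(@sum_neq P0 x dP0) -(@sum_neq P1 x dP1) mulr_sumr; apply: ler_sum => i _; exact: F2.
by split.
Qed.

Lemma Dout (Q0 Q1 : X -> R) (K : R) : 1 <= K ->
  (forall y, 0 <= Q1 y) -> (forall y, Q0 y <= K * Q1 y) ->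
  Dinf Q0 Q1 = (ln (mx Q0 Q1))%:E /\ ln (mx Q0 Q1) <= ln K.
Proof.
move=> K1 q1 HK; rewrite /Dinf ifF; last first.
  apply/negbTE/existsPn => y; apply/negP => /andP [h /eqP e].
  by have := HK y; rewrite e mulr0 leNgt h.
split=> //.
have mK : mx Q0 Q1 <= K.
  apply/bigmax_leP; split; first by apply: le_trans K1.
  move=> y _; have [e|nz] := eqVneq (Q1 y) 0.
    by rewrite e invr0 mulr0; apply: le_trans K1.
  have p1 : 0 < Q1 y by rewrite lt_def nz q1.
  by rewrite ler_pdivrMr.
have [m0|m0] := leP (mx Q0 Q1) 0.
  by rewrite ln0 // ln_ge0.
by rewrite ler_ln // posrE; apply: lt_le_trans K1.
Qed.
End S.
Arguments mx {R X}.
Arguments sum_neq {R X}.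
Arguments chan_outE {R X}.
Arguments Dinf_fin {R X P0 P1}.
Arguments Dout {R X Q0 Q1 K}.

Lemma key_alg (R : realType) (s M a0 a1 hi : R) : 0 <= s -> s <= 1 -> 1 <= M ->
  0 <= a0 -> a0 <= 1 -> 0 <= a1 -> a0 <= M * a1 -> 0 < hi ->
  hi * (s + (1 - s) * a0) <= M / (1 + s * (M - 1)) * (hi * (s + (1 - s) * a1)).
Proof.
move=> s0 s1 M1 a00 a01 a10 aM hi0.
have D0 : 0 < 1 + s * (M - 1) by nra.
rewrite mulrAC ler_pdivlMr //.
have h1 : 0 <= s * (1 - s) * (M - 1) * (1 - a0) by rewrite !mulr_ge0 // subr_ge0.
have h2 : 0 <= (1 - s) * (M * a1 - a0) by rewrite mulr_ge0 // subr_ge0.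
nra.
Qed.

Lemma key_ln (R : realType) (s M : R) : 0 <= s -> s <= 1 -> 1 <= M ->
  ln (M / (1 + s * (M - 1))) <= (1 - s) * ln M /\ 1 <= M / (1 + s * (M - 1)).
Proof.
move=> s0 s1 M1.
have D0 : 0 < 1 + s * (M - 1) by nra.
split.
  rewrite ln_div ?posrE //; last by apply: lt_le_trans M1.
  have := @ln_conc R s M s0 s1 (lt_le_trans ltr01 M1); lra.
by rewrite ler_pdivlMr // mul1r; nra.
Qed.

Lemma dist_le1 (R : realType) (X : finType) (P : X -> R) y : is_dist P -> P y <= 1.
Proof.
move=> dP; rewrite -subr_ge0 -(sum_neq P y dP); apply: sumr_ge0 => i _; by case: dP.
Qed.

Lemma bound (R : realType) (X : finType) (u v : R) (P0 P1 : X -> R) :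
  0 <= u -> 0 <= v -> 0 < Num.max u v -> is_dist P0 -> is_dist P1 ->
  (0 < Dinf P0 P1 < +oo)%E ->
  [/\ Dinf P0 P1 = (ln (mx P0 P1))%:E, 0 < ln (mx P0 P1),
      Dinf (chan_out u v P0) (chan_out u v P1)
        = (ln (mx (chan_out u v P0) (chan_out u v P1)))%:E &
      ln (mx (chan_out u v P0) (chan_out u v P1))
        <= (`|v - u| / Num.max u v) * ln (mx P0 P1)].
Proof.
move=> u0 v0 hi0 dP0 dP1 DP.
have [DPE M1 F2 F3] := Dinf_fin dP0 dP1 DP.
have lnM : 0 < ln (mx P0 P1) by apply: ln_gt0.
set M := mx P0 P1 in M1 F2 F3 lnM *.
have P0ge y : 0 <= P0 y by case: dP0.
have P1ge y : 0 <= P1 y by case: dP1.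
have P0le y : P0 y <= 1 by apply: dist_le1.
have P1le y : P1 y <= 1 by apply: dist_le1.
have [huv|huv] := leP u v.
- rewrite max_r // in hi0 *; rewrite ger0_norm ?subr_ge0 //.
  set s := u / v.
  have s0 : 0 <= s by rewrite divr_ge0.
  have s1 : s <= 1 by rewrite ler_pdivrMr // mul1r.
  have [lnK K1] := key_ln s0 s1 (ltW M1).
  have e p : u + (v - u) * p = v * (s + (1 - s) * p).
    by rewrite /s; field; rewrite gt_eqF.
  have HK y : chan_out u v P0 y <= M / (1 + s * (M - 1)) * chan_out u v P1 y.
    rewrite !chan_outE // !e; apply: key_alg => //; exact: (ltW M1).
  have Q1ge y : 0 <= chan_out u v P1 y.
    by rewrite chan_outE // e mulr_ge0 // addr_ge0 // mulr_ge0 // subr_ge0.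
  have [DQ lnQ] := Dout K1 Q1ge HK.
  split => //; apply: (le_trans lnQ); apply: (le_trans lnK).
  by rewrite /s (_ : 1 - u / v = (v - u) / v) //; field; rewrite gt_eqF.
- rewrite (max_l (ltW huv)) in hi0 *; rewrite (ler0_norm (ltW _)) ?subr_lt0 //.
  set s := v / u.
  have s0 : 0 <= s by rewrite divr_ge0.
  have s1 : s <= 1 by rewrite ler_pdivrMr // mul1r ltW.
  have [lnK K1] := key_ln s0 s1 (ltW M1).
  have e p : u + (v - u) * p = u * (s + (1 - s) * (1 - p)).
    by rewrite /s; field; rewrite gt_eqF.
  have HK y : chan_out u v P0 y <= M / (1 + s * (M - 1)) * chan_out u v P1 y.
    rewrite !chan_outE // !e; apply: key_alg => //; rewrite ?subr_ge0 //.
      exact: (ltW M1).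
    by rewrite gerBl.
  have Q1ge y : 0 <= chan_out u v P1 y.
    by rewrite chan_outE // e mulr_ge0 // addr_ge0 // mulr_ge0 // subr_ge0.
  have [DQ lnQ] := Dout K1 Q1ge HK.
  split => //; apply: (le_trans lnQ); apply: (le_trans lnK).
  by rewrite /s (_ : 1 - v / u = - (v - u) / u) //; field; rewrite gt_eqF.
Qed.

Lemma ln_ge (R : realType) (x : R) : 0 < x -> 1 - x^-1 <= ln x.
Proof.
move=> x0; have := @le_ln1Dx R (x^-1 - 1).
rewrite (_ : 1 + (x^-1 - 1) = x^-1); last by ring.
rewrite lnV ?posrE // => H.
have : -1 < x^-1 - 1 by have := invr_gt0 x; rewrite x0; lra.
move/H; lra.
Qed.

Lemma ln_le (R : realType) (x : R) : 0 < x -> ln x <= x - 1.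
Proof.
move=> x0; have := @le_ln1Dx R (x - 1).
rewrite (_ : 1 + (x - 1) = x); last by ring.
apply; lra.
Qed.

Definition Pab (R : realType) (X : finType) (a b : X) (al be : R) (x : X) : R :=
  if x == a then al else if x == b then be else 0.

Lemma sum_Pab (R : realType) (X : finType) (a b : X) (al be : R) : a != b ->
  \sum_x Pab a b al be x = al + be.
Proof.
move=> ab; rewrite (bigD1 a) //= /Pab eqxx (bigD1 b) /=; last by rewrite eq_sym.
rewrite eqxx (negbTE (_ : b != a)); last by rewrite eq_sym.
rewrite big1 ?addr0 // => i /andP [ia ib]; by rewrite (negbTE ia) (negbTE ib).
Qed.

Lemma seq_props (R : realType) (X : finType) (a b : X) (e : R) :
  0 < e -> 3 * e <= 1 -> a != b ->
  [/\ is_dist (Pab a b (1 - e) e), is_dist (Pab a b (1 - 2 * e) (2 * e)),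
      (0 < Dinf (Pab a b (1 - e) e) (Pab a b (1 - 2 * e) (2 * e)) < +oo)%E &
      ln (mx (Pab a b (1 - e) e) (Pab a b (1 - 2 * e) (2 * e))) <= e / (1 - 2 * e)].
Proof.
move=> e0 e3 ab.
have ba : b != a by rewrite eq_sym.
have d0 : is_dist (Pab a b (1 - e) e).
  split; last by rewrite sum_Pab //; ring.
  by move=> x; rewrite /Pab; case: ifP => _; [lra|case: ifP => _; lra].
have d1 : is_dist (Pab a b (1 - 2 * e) (2 * e)).
  split; last by rewrite sum_Pab //; ring.
  by move=> x; rewrite /Pab; case: ifP => _; [lra|case: ifP => _; lra].
have D1 : 0 < 1 - 2 * e by lra.
have mxge : (1 - e) / (1 - 2 * e) <= mx (Pab a b (1 - e) e) (Pab a b (1 - 2 * e) (2 * e)).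
  have -> : (1 - e) / (1 - 2 * e) = Pab a b (1 - e) e a / Pab a b (1 - 2 * e) (2 * e) a.
    by rewrite /Pab eqxx.
  rewrite /mx; exact: le_bigmax.
have mxle : mx (Pab a b (1 - e) e) (Pab a b (1 - 2 * e) (2 * e)) <= (1 - e) / (1 - 2 * e).
  apply/bigmax_leP; split; first by rewrite divr_ge0 //; lra.
  move=> x _; rewrite /Pab; case: ifP => _; first by [].
  case: ifP => _; last by rewrite mul0r divr_ge0 //; lra.
  rewrite ler_pdivlMr // mulrAC ler_pdivrMr; last by lra.
  nra.
have M1 : 1 < (1 - e) / (1 - 2 * e) by rewrite ltr_pdivlMr //; lra.
split => //.
  rewrite /Dinf ifF; last first.
    apply/negbTE/existsPn => x; rewrite /Pab; case: ifP => _; first by rewrite gt_eqF ?andbF.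
    case: ifP => _; first by rewrite gt_eqF ?andbF //; lra.
    by rewrite ltxx.
  by rewrite lte_fin ltry andbT ln_gt0 //; apply: lt_le_trans mxge.
apply: le_trans (ln_le _) _; first by apply: lt_le_trans mxge; apply: lt_trans M1.
rewrite lerBlDr (le_trans mxle) // (_ : e / (1 - 2 * e) + 1 = (1 - e) / (1 - 2 * e)) //.
by field; lra.
Qed.

Lemma lower_Q (R : realType) (X : finType) (u v : R) (a b : X) (e : R) :
  0 <= u -> 0 <= v -> 0 < Num.max u v -> a != b -> 0 < e -> 3 * e <= 1 ->
  1 - (Num.max u v - 2 * `|v - u| * e) / (Num.max u v - `|v - u| * e)
  <= ln (mx (chan_out u v (Pab a b (1 - e) e))
            (chan_out u v (Pab a b (1 - 2 * e) (2 * e)))).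
Proof.
move=> u0 v0 hi0 ab e0 e3.
have ba : b != a by rewrite eq_sym.
have [d0 d1 _ _] := seq_props e0 e3 ab.
set Q0 := chan_out u v _; set Q1 := chan_out u v _.
have key y : 0 < Q1 y -> 0 < Q0 y -> 1 - Q1 y / Q0 y <= ln (mx Q0 Q1).
  move=> q1 q0; have r0 : 0 < Q0 y / Q1 y by rewrite divr_gt0.
  rewrite -invf_div; apply: le_trans (ln_ge r0) _.
  rewrite ler_ln //; first by rewrite /mx; exact: le_bigmax.
  by rewrite posrE; apply: lt_le_trans r0 _; rewrite /mx; exact: le_bigmax.
have [huv|huv] := leP u v.
- rewrite max_r // in hi0 *; rewrite ger0_norm ?subr_ge0 //.
  have E0 : Q0 a = v - (v - u) * e by rewrite /Q0 chan_outE // /Pab eqxx; ring.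
  have E1 : Q1 a = v - 2 * (v - u) * e by rewrite /Q1 chan_outE // /Pab eqxx; ring.
  rewrite -E0 -E1; apply: key; rewrite ?E0 ?E1; nra.
- rewrite (max_l (ltW huv)) in hi0 *; rewrite (ler0_norm (ltW _)) ?subr_lt0 //.
  have E0 : Q0 b = u - - (v - u) * e by rewrite /Q0 chan_outE // /Pab eqxx (negbTE ba); ring.
  have E1 : Q1 b = u - 2 * - (v - u) * e by rewrite /Q1 chan_outE // /Pab eqxx (negbTE ba); ring.
  rewrite -E0 -E1; apply: key; rewrite ?E0 ?E1; nra.
Qed.

Lemma lower_alg (R : realType) (hi d e lq lp : R) :
  0 <= d -> d <= hi -> 0 < hi -> 0 < e -> 3 * e <= 1 ->
  1 - (hi - 2 * d * e) / (hi - d * e) <= lq -> 0 < lp -> lp <= e / (1 - 2 * e) ->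
  d / hi * (1 - 2 * e) <= lq / lp.
Proof.
move=> d0 dh hi0 e0 e3 hq lp0 hp.
have D1 : 0 < 1 - 2 * e by lra.
have D2 : 0 < hi - d * e by nra.
rewrite ler_pdivlMr //; apply: le_trans hq.
have -> : 1 - (hi - 2 * d * e) / (hi - d * e) = d * e / (hi - d * e) by field; lra.
apply: (@le_trans _ _ (d / hi * (1 - 2 * e) * (e / (1 - 2 * e)))).
  apply: ler_wpM2l => //; rewrite mulr_ge0 ?divr_ge0 //; lra.
have -> : d / hi * (1 - 2 * e) * (e / (1 - 2 * e)) = d * e / hi by field; lra.
rewrite ler_pdivrMr // mulrAC ler_pdivlMr //; nra.
Qed.

Definition eps (R : realType) (n : nat) : R := harmonic (n + 2)%N.

Lemma eps_gt0 (R : realType) n : 0 < eps R n.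
Proof. exact: harmonic_gt0. Qed.

Lemma eps3 (R : realType) n : 3 * eps R n <= 1.
Proof.
rewrite /eps /= -[_ * _^-1]/(3 / _) ler_pdivrMr ?ltr0Sn // mul1r ler_nat.
by rewrite addn2.
Qed.

Lemma eps_cvg (R : realType) : eps R n @[n --> \oo] --> 0.
Proof. by have := @cvg_harmonic R; rewrite -(cvg_shiftn 2). Qed.

Lemma norm_le_max (R : realType) (u v : R) : 0 <= u -> 0 <= v ->
  `|v - u| <= Num.max u v.
Proof.
move=> u0 v0; have [h|h] := leP u v.
  by rewrite ?max_r // ger0_norm ?subr_ge0 //; lra.
by rewrite ?(max_l (ltW h)) ler0_norm; lra.
Qed.

Unset Implicit Arguments.

Theorem theorem4p5 (R : realType) (X : finType) (u v : R) :
  (2 <= #|X|)%N ->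
  0 <= u <= 1 -> 0 <= v <= 1 -> v = 1 - (#|X|.-1)%:R * u ->
  let eta := `|v - u| / Num.max u v in
  [/\ has_sup (ratio_set X u v), sup (ratio_set X u v) = eta &
      exists (a b : X) (P0 P1 : nat -> X -> R) (r : nat -> R),
        [/\ a != b,
            (forall n, [/\ is_dist (P0 n), is_dist (P1 n),
                (forall x, x != a -> x != b -> P0 n x = 0 /\ P1 n x = 0),
                (0 < Dinf (P0 n) (P1 n) < +oo)%E &
                Dinf (chan_out u v (P0 n)) (chan_out u v (P1 n))
                  = ((r n)%:E * Dinf (P0 n) (P1 n))%E]),
            (forall x, P0 n x @[n --> \oo] --> ((if x == a then 1 else 0) : R)),
            (forall x, P1 n x @[n --> \oo] --> ((if x == a then 1 else 0) : R)) &
            r n @[n --> \oo] --> eta]].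
Proof.
move=> q2 /andP[u0 u1] /andP[v0 v1] ev eta.
have hi0 : 0 < Num.max u v.
  rewrite lt_max; have [u0'|u0'] := eqVneq u 0.
    by rewrite ev u0' mulr0 subr0 ltr01 orbT.
  by rewrite lt_def u0' u0.
have dh := norm_le_max u0 v0.
have /card_gt1P [a [b [_ _ ab]]] := q2.
pose P0 n := Pab a b (1 - eps R n) (eps R n).
pose P1 n := Pab a b (1 - 2 * eps R n) (2 * eps R n).
pose r n := ln (mx (chan_out u v (P0 n)) (chan_out u v (P1 n))) / ln (mx (P0 n) (P1 n)).
have Hn n : [/\ is_dist (P0 n), is_dist (P1 n), (0 < Dinf (P0 n) (P1 n) < +oo)%E,
    Dinf (chan_out u v (P0 n)) (chan_out u v (P1 n)) = ((r n)%:E * Dinf (P0 n) (P1 n))%E &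
    r n <= eta /\ eta * (1 - 2 * eps R n) <= r n].
  have [dP0 dP1 DP lnP] := seq_props (eps_gt0 R n) (eps3 R n) ab.
  have [DPE lnP0 DQE lnQ] := bound u0 v0 hi0 dP0 dP1 DP.
  split => //; last split => //.
  - by rewrite DQE DPE -EFinM /r divfK // gt_eqF.
  - by rewrite /r ler_pdivrMr.
  - apply: lower_alg => //; [exact: eps_gt0 | exact: eps3 |].
    exact: lower_Q (eps_gt0 R n) (eps3 R n).
have ub x : ratio_set X u v x -> x <= eta.
  move=> [Q0 [Q1 [dQ0 dQ1 DP E]]].
  have [DPE lnP0 DQE lnQ] := bound u0 v0 hi0 dQ0 dQ1 DP.
  move: E; rewrite DQE DPE -EFinM => /eqP; rewrite eqe => /eqP E.
  by rewrite -(ler_pM2r lnP0) -E.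
have inS n : ratio_set X u v (r n).
  by have [d0 d1 DP E _] := Hn n; exists (P0 n), (P1 n).
have rcvg : r n @[n --> \oo] --> eta.
  have lc : (fun n => eta * (1 - 2 * eps R n)) @ \oo --> eta * (1 - 2 * 0).
    apply: cvgMr; apply: cvgB; first exact: cvg_cst.
    apply: cvgMr; exact: eps_cvg.
  rewrite mulr0 subr0 mulr1 in lc.
  apply: (squeeze_cvgr _ lc (cvg_cst eta)).
  by near=> n; have [_ _ _ _ [h1 h2]] := Hn n; rewrite h1 h2.
have hs : has_sup (ratio_set X u v).
  by split; [exists (r 0) | exists eta => x /ub].
split => //.
  apply/eqP; rewrite eq_le; apply/andP; split.
    by apply: ge_sup; [exists (r 0) | move=> x /ub].
  rewrite leNgt; apply/negP => hlt.
  have [N _ HN] := cvgr_gt eta rcvg _ hlt.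
  have := HN N (leqnn N); rewrite /= ltNge.
  by rewrite (sup_upper_bound hs (inS N)).
exists a, b, P0, P1, r; split => //.
- move=> n; have [d0 d1 DP E _] := Hn n; split => // x xa xb.
  by rewrite /P0 /P1 /Pab (negbTE xa) (negbTE xb).
- move=> x; rewrite /P0 /Pab; case: (x == a).
    rewrite -[Y in _ --> Y]subr0; apply: cvgB; [exact: cvg_cst | exact: eps_cvg].
  case: (x == b); [exact: eps_cvg | exact: cvg_cst].
- move=> x; rewrite /P1 /Pab; case: (x == a).
    rewrite -[Y in _ --> Y]subr0 -[Y in _ - Y](mulr0 2).
    apply: cvgB; [exact: cvg_cst | apply: cvgMr; exact: eps_cvg].
  case: (x == b); last exact: cvg_cst.
  rewrite -(mulr0 2); apply: cvgMr; exact: eps_cvg.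
Unshelve. all: by end_near.
Qed.
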